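(* For every cardinal $\kappa$ there is a cardinal $\lambda$ such that $\lambda\rightarrow(\lambda)_\kappa^{\mathrm{AFP}}$. In fact, $\lambda=\max\{\omega,(2^\kappa)^+\}$ suffices.
   Context: For a group $G$, an ordinal $\mu$ and a $\mu$-sequence $(g_\alpha\mid\alpha<\mu)$ of elements of $G$, its set of adjacent finite products is $\mathrm{AFP}(g_\alpha\mid\alpha<\mu)=\{g_\alpha g_{\alpha+1}\cdots g_{\alpha+n}\mid \alpha<\mu,\ n<\omega\}$ (all indices lying below $\mu$). For a group $G$, an ordinal $\mu$ and a cardinal $\kappa$, $G\rightarrow(\mu)_\kappa^{\mathrm{AFP}}$ means: for every colouring $c:G\to\kappa$ there is an injective $\mu$-sequence $(g_\alpha\mid\alpha<\mu)$ of elements of $G$ such that $\mathrm{AFP}(g_\alpha\mid\alpha<\mu)$ is monochromatic for $c$. For a cardinal $\lambda$, $\lambda\rightarrow(\mu)_\kappa^{\mathrm{AFP}}$ means that $G\rightarrow(\mu)_\kappa^{\mathrm{AFP}}$ holds for every group $G$ with $|G|=\lambda$. *)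

(* Defs.v *)
(* plain type theory; cardinals are represented by types,
   ordinals by well-ordered types. *)
From Stdlib Require Import Arith.

Set Implicit Arguments.

Definition inj {A B : Type} (f : A -> B) : Prop :=
  forall x y, f x = f y -> x = y.

Definition card_le (A B : Type) : Prop := exists f : A -> B, inj f.

Definition card_eq (A B : Type) : Prop :=
  exists (f : A -> B) (g : B -> A),
    (forall x, g (f x) = x) /\ (forall y, f (g y) = y).

Definition finite_type (A : Type) : Prop :=
  exists (n : nat) (f : A -> nat), inj f /\ forall x, f x < n.

Record IsGroup (G : Type) (mul : G -> G -> G) (one : G) (inv : G -> G) : Prop := {
  grp_assoc : forall x y z, mul x (mul y z) = mul (mul x y) z;
  grp_mul1g : forall x, mul one x = x;
  grp_mulVg : forall x, mul (inv x) x = one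
}.

Record IsWellOrder (L : Type) (lt : L -> L -> Prop) : Prop := {
  wo_irrefl : forall a, ~ lt a a;
  wo_trans : forall a b c, lt a b -> lt b c -> lt a c;
  wo_total : forall a b, lt a b \/ a = b \/ lt b a;
  wo_wf : well_founded lt
}.

(* (L, lt) is the initial ordinal of the cardinal  max{omega, (2^|K|)^+},
   i.e. the least infinite cardinal strictly above 2^|K|:
   L is infinite, |L| is not <= 2^|K|, and every proper initial segment
   is finite or of size <= 2^|K|. *)
Definition IsLambda (K L : Type) (lt : L -> L -> Prop) : Prop :=
  IsWellOrder lt /\
  ~ finite_type L /\
  ~ card_le L (K -> bool) /\
  (forall a : L, finite_type {b : L | lt b a} \/ card_le {b : L | lt b a} (K -> bool)).

Definition IsSucc (L : Type) (lt : L -> L -> Prop) (a b : L) : Prop :=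
  lt a b /\ forall c, lt a c -> c = b \/ lt b c.

(* AFP lt mul g a n x : x = g_a g_(a+1) ... g_(a+n) *)
Inductive AFP (L G : Type) (lt : L -> L -> Prop) (mul : G -> G -> G) (g : L -> G)
  : L -> nat -> G -> Prop :=
| AFP0 : forall a, AFP lt mul g a 0 (g a)
| AFPS : forall a b n x, IsSucc lt a b -> AFP lt mul g b n x ->
         AFP lt mul g a (S n) (mul (g a) x).

(* |L| -> (ordertype of (L,lt))^AFP_|K| : every group of cardinality |L|,
   every colouring by K admits an injective (L,lt)-indexed sequence whose
   set of adjacent finite products is monochromatic. *)
Definition ArrowAFP (K L : Type) (lt : L -> L -> Prop) : Prop :=
  forall (G : Type) (mul : G -> G -> G) (one : G) (inv : G -> G),
    IsGroup mul one inv -> card_eq G L ->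
    forall c : G -> K,
      exists g : L -> G, inj g /\
        exists i : K, forall (a : L) (n : nat) (x : G), AFP lt mul g a n x -> c x = i.

(* Main.v *)
Require Import Defs.
From mathcomp Require Import ssreflect ssrbool ssrfun eqtype.
From mathcomp Require Import boolp.
From mathcomp Require wochoice.
From Stdlib Require Import Classical ClassicalEpsilon FunctionalExtensionality PropExtensionality Lia Arith.
Require Import Defs.

Set Implicit Arguments.

Definition EM := Classical_Prop.classic.

Lemma sigE {A} {P : A -> Prop} (u v : {x | P x}) : proj1_sig u = proj1_sig v -> u = v.
Proof.
case: u => x px; case: v => y py /= E; subst y.
by rewrite (Classical_Prop.proof_irrelevance _ px py).
Qed.

Lemma choice_fun {A B} {R : A -> B -> Prop} :
  (forall a, exists b, R a b) -> exists f : A -> B, forall a, R a (f a).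
Proof.
move=> H; exists (fun a => proj1_sig (constructive_indefinite_description _ (H a))).
by move=> a; case: (constructive_indefinite_description _ (H a)).
Qed.

Lemma cl_refl A : card_le A A.
Proof. by exists id. Qed.

Lemma cl_trans A B C : card_le A B -> card_le B C -> card_le A C.
Proof. by move=> [f Hf] [g Hg]; exists (fun x => g (f x)) => x y /Hg /Hf. Qed.

Lemma cl_sub {A} (P Q : A -> Prop) : (forall x, P x -> Q x) -> card_le {x | P x} {x | Q x}.
Proof.
move=> H; exists (fun u => exist Q (proj1_sig u) (H _ (proj2_sig u))) => u v E.
by apply: sigE; move: (f_equal (@proj1_sig _ _) E).
Qed.

Lemma cl_sigT A : card_le A {x : A | True}.
Proof. by exists (fun x => exist _ x I) => x y E; move: (f_equal (@proj1_sig _ _) E). Qed.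

Lemma cl_Tsig A : card_le {x : A | True} A.
Proof. by exists (@proj1_sig _ _) => x y; apply: sigE. Qed.

Lemma cl_sig_le {A} (P : A -> Prop) : card_le {x | P x} A.
Proof. by exists (@proj1_sig _ _) => x y; apply: sigE. Qed.

Lemma cl_img {A B} (P : A -> Prop) (f : A -> B) :
  card_le {y | exists x, P x /\ y = f x} {x | P x}.
Proof.
have H : forall u : {y | exists x, P x /\ y = f x}, exists v : {x | P x}, proj1_sig u = f (proj1_sig v).
  by move=> [y [x [px E]]]; exists (exist _ x px).
have [g Hg] := choice_fun H.
by exists g => u v E; apply: sigE; rewrite Hg (Hg v) E.
Qed.

Lemma cl_prod A A' B B' : card_le A A' -> card_le B B' -> card_le (A * B) (A' * B').
Proof.
move=> [f Hf] [g Hg]; exists (fun p => (f p.1, g p.2)) => [[a b] [c d]] /= [] /Hf -> /Hg -> //.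
Qed.

Lemma cl_sum A A' B B' : card_le A A' -> card_le B B' -> card_le (A + B) (A' + B').
Proof.
move=> [f Hf] [g Hg]; exists (fun p => match p with inl a => inl (f a) | inr b => inr (g b) end).
by move=> [a|b] [c|d] //= [] => [/Hf|/Hg] ->.
Qed.

Lemma cl_arrow A B C : card_le A B -> card_le (B -> C) (A -> C) \/ True.
Proof. by right. Qed.

Lemma fin_cl A B : card_le A B -> finite_type B -> finite_type A.
Proof.
move=> [f Hf] [n [g [Hg Hb]]]; exists n, (fun x => g (f x)); split => //.
by move=> x y /Hg /Hf.
Qed.

Lemma fin_sum A B : finite_type A -> finite_type B -> finite_type (A + B).
Proof.
move=> [n [f [Hf Hb]]] [m [g [Hg Hc]]].
exists (n + m), (fun p => match p with inl a => f a | inr b => n + g b end); split.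
- move=> [a|b] [c|d] /= E.
  + by rewrite (Hf _ _ E).
  + by have := Hb a; lia.
  + by have := Hb c; lia.
  + have E' : g b = g d by lia.
    by rewrite (Hg _ _ E').
- move=> [a|b]; [have := Hb a | have := Hc b]; lia.
Qed.

Lemma lin_inj n a b c d : b < n -> d < n -> a * n + b = c * n + d -> a = c /\ b = d.
Proof.
move=> Hb Hd E.
case: (Nat.lt_trichotomy a c) => [H|[H|H]].
- have : (a + 1) * n <= c * n by apply: Nat.mul_le_mono_r; lia.
  lia.
- subst; lia.
- have : (c + 1) * n <= a * n by apply: Nat.mul_le_mono_r; lia.
  lia.
Qed.

Lemma fin_prod A B : finite_type A -> finite_type B -> finite_type (A * B).
Proof.
move=> [n [f [Hf Hb]]] [m [g [Hg Hc]]].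
exists (n * m), (fun p => f p.1 * m + g p.2); split.
- move=> [a b] [c d] /= E.
  have [E1 E2] := @lin_inj m (f a) (g b) (f c) (g d) (Hc b) (Hc d) E.
  by rewrite (Hf _ _ E1) (Hg _ _ E2).
- move=> [a b] /=; have := Hb a; have := Hc b => h1 h2.
  have : (f a + 1) * m <= n * m by apply: Nat.mul_le_mono_r; lia.
  lia.
Qed.

Lemma fin_bound K (m : K -> nat) : finite_type K -> exists M, forall i, m i < M.
Proof.
move=> [n [e [He Hb]]].
suff : forall k, exists M, forall i, e i < k -> m i < M.
  by move=> /(_ n) [M HM]; exists M => i; apply: HM.
elim=> [|k [M HM]]; first by exists 0 => i; lia.
case: (EM (exists i, e i = k)) => [[i0 Hi0]|Hn].
- exists (M + m i0 + 1) => i Hi.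
  case: (Nat.eq_dec (e i) k) => [Ek|Nk].
  + have -> : i = i0 by apply: He; rewrite Ek Hi0.
    lia.
  + have := HM i; lia.
- exists M => i Hi; apply: HM.
  case: (Nat.eq_dec (e i) k) => [Ek|Nk]; last lia.
  by case: Hn; exists i.
Qed.

Lemma nat_not_finite : ~ finite_type nat.
Proof.
move=> [n [f [Hf Hb]]].
elim: n f Hf Hb => [|n IH] f Hf Hb; first by have := Hb 0; lia.
case: (EM (exists x, f x = n)) => [[x0 Hx0]|Hn].
- pose s y := if y <? x0 then y else S y.
  apply: (IH (fun y => f (s y))).
  + move=> y z /Hf; rewrite /s.
    case: (Nat.ltb_spec y x0); case: (Nat.ltb_spec z x0); lia.
  + move=> y; have := Hb (s y).
    have : f (s y) <> n.
      move=> E; rewrite -Hx0 in E; move: (Hf _ _ E); rewrite /s.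
      case: (Nat.ltb_spec y x0); lia.
    lia.
- apply: (IH f Hf) => x; have := Hb x.
  have : f x <> n by move=> E; apply: Hn; exists x.
  lia.
Qed.

Lemma fin_empty A : (A -> False) -> finite_type A.
Proof. by move=> H; exists 0, (fun x => match H x with end); split => x; case: (H x). Qed.

Lemma fin_unit : finite_type unit.
Proof. exists 1, (fun _ => 0); split; [by move=> [] [] | move=> _; lia]. Qed.

Lemma fin_bool : finite_type bool.
Proof. exists 2, (fun b : bool => if b then 0 else 1); split; [by move=> [] [] | move=> [] /=; lia]. Qed.

Lemma fin_option A : finite_type A -> finite_type (option A).
Proof.
move=> H; apply: (fin_cl (B := (A + unit)%type)); last by apply: fin_sum => //; exact: fin_unit.
exists (fun o => match o with Some a => inl a | None => inr tt end).
by move=> [a|] [b|] //= [] ->.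
Qed.

Lemma WO_exists (T : Type) : exists lt : T -> T -> Prop, IsWellOrder lt.
Proof.
case: (wochoice.well_ordering_principle (boolp.classicType T)) => R HR.
pose lt (x y : T) := R x y /\ x <> y.
have min2 : forall x y : T, exists z, (z = x \/ z = y) /\ R z x /\ R z y.
  move=> x y.
  have [|z [[Hz Hm] _]] := HR (fun u => `[< u = x \/ u = y >]) _.
    by exists x; rewrite /in_mem /=; apply/boolp.asboolP; left.
  exists z; move: Hz; rewrite /in_mem /= => /boolp.asboolP Hz; split=> //.
  by split; apply: Hm; rewrite /in_mem /=; apply/boolp.asboolP; [left|right].
have anti : forall x y : T, R x y -> R y x -> x = y.
  move=> x y Rxy Ryx.
  have [|z [_ Hu]] := HR (fun u => `[< u = x \/ u = y >]) _.
    by exists x; rewrite /in_mem /=; apply/boolp.asboolP; left.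
  have Hx : wochoice.minimum_of R (fun u => `[< u = x \/ u = y >]) x.
    split; first by rewrite /in_mem /=; apply/boolp.asboolP; left.
    move=> u; rewrite /in_mem /= => /boolp.asboolP [->|->] //.
    by have [w [[->|->] [? ?]]] := min2 x x.
  have Hy : wochoice.minimum_of R (fun u => `[< u = x \/ u = y >]) y.
    split; first by rewrite /in_mem /=; apply/boolp.asboolP; right.
    move=> u; rewrite /in_mem /= => /boolp.asboolP [->|->] //.
    by have [w [[->|->] [? ?]]] := min2 y y.
  by rewrite -(Hu _ Hx) (Hu _ Hy).
have refl : forall x : T, R x x by move=> x; have [w [[->|->] [? ?]]] := min2 x x.
have trans : forall x y z : T, R x y -> R y z -> R x z.
  move=> x y z Rxy Ryz.
  have [|m [[Hm Hmin] _]] := HR (fun u => `[< u = x \/ u = y \/ u = z >]) _.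
    by exists x; rewrite /in_mem /=; apply/boolp.asboolP; left.
  have Hx : R m x by apply: Hmin; rewrite /in_mem /=; apply/boolp.asboolP; left.
  have Hy : R m y by apply: Hmin; rewrite /in_mem /=; apply/boolp.asboolP; right; left.
  have Hz : R m z by apply: Hmin; rewrite /in_mem /=; apply/boolp.asboolP; right; right.
  move: Hm; rewrite /in_mem /= => /boolp.asboolP [Ex|[Ey|Ez]]; subst m => //.
  - by rewrite (anti _ _ Rxy Hx).
  - by rewrite (anti _ _ Ryz Hy) in Rxy.
exists lt; split.
- by move=> a [_ H].
- move=> a b c [Hab nab] [Hbc nbc]; split; first exact: trans Hab Hbc.
  by move=> E; subst c; apply: nab; apply: anti.
- move=> a b; case: (Classical_Prop.classic (a = b)) => [->|nab]; first by right; left.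
  have [w [[->|->] [? ?]]] := min2 a b.
  + by left.
  + by right; right; split=> // E; apply: nab.
- move=> a; apply: NNPP => Na.
  have [|m [[Hm Hmin] _]] := HR (fun u => `[< ~ Acc lt u >]) _.
    by exists a; rewrite /in_mem /=; apply/boolp.asboolP.
  move: Hm; rewrite /in_mem /= => /boolp.asboolP; apply; constructor => y [Ryx nyx].
  apply: NNPP => Ny.
  have Hmy : R m y by apply: Hmin; rewrite /in_mem /=; apply/boolp.asboolP.
  by apply: nyx; apply: anti.
Qed.


Lemma fin_union {A} (P Q R : A -> Prop) : (forall x, P x -> Q x \/ R x) ->
  finite_type {x | Q x} -> finite_type {x | R x} -> finite_type {x | P x}.
Proof.
move=> H fQ fR; apply: (fin_cl (B := ({x | Q x} + {x | R x})%type)); last exact: fin_sum.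
have G : forall u : {x | P x}, exists v : ({x | Q x} + {x | R x})%type,
    match v with inl q => proj1_sig q = proj1_sig u | inr r => proj1_sig r = proj1_sig u end.
  move=> [x px]; case: (H x px) => [q|r]; [exists (inl (exist _ x q)) | exists (inr (exist _ x r))] => //.
have [f Hf] := choice_fun G; exists f => u v E.
apply: sigE; move: (Hf u) (Hf v); rewrite E; case: (f v) => ? -> -> //.
Qed.

Lemma fin_single {A} (a : A) : finite_type {x | x = a}.
Proof.
exists 1, (fun _ => 0); split; last by move=> _; lia.
by move=> [x Hx] [y Hy] _; apply: sigE => /=; rewrite Hx Hy.
Qed.

Lemma fin_none {A} (P : A -> Prop) : (forall x, ~ P x) -> finite_type {x | P x}.
Proof. by move=> H; apply: fin_empty => [[x px]]; apply: (H x). Qed.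

Lemma fin_subset {A} (P Q : A -> Prop) : (forall x, P x -> Q x) -> finite_type {x | Q x} -> finite_type {x | P x}.
Proof. by move=> H; apply: fin_cl; apply: cl_sub. Qed.

Section Rec.
Variables (W : Type) (R : W -> W -> Prop) (wf : well_founded R).

Definition trec {A} (H : W -> (W -> A -> Prop) -> A) : W -> A :=
  Fix wf (fun _ => A) (fun w f => H w (fun v y => exists h : R v w, f v h = y)).

Lemma trec_eq {A} (H : W -> (W -> A -> Prop) -> A) w :
  trec H w = H w (fun v y => R v w /\ trec H v = y).
Proof.
rewrite /trec Fix_eq.
- congr (H w); apply: functional_extensionality => v; apply: functional_extensionality => y.
  apply: propositional_extensionality; split; [by move=> [h E]; split | by move=> [h E]; exists h].
- move=> x f g E; congr (H x); apply: functional_extensionality => v; apply: functional_extensionality => y.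
  apply: propositional_extensionality; split; move=> [h E']; exists h.
  + by rewrite -E.
  + by rewrite E.
Qed.

Lemma wf_min (P : W -> Prop) : (exists x, P x) -> exists x, P x /\ forall y, P y -> ~ R y x.
Proof.
move=> [x Px]; apply: NNPP => N.
suff : forall z, ~ P z by move/(_ x).
move=> z; elim/(well_founded_ind wf): z => z IH Pz.
by apply: N; exists z; split => // y Py Ryz; apply: (IH y Ryz Py).
Qed.

Hypothesis tot : forall a b, R a b \/ a = b \/ R b a.

Lemma greedy {X : Type} (P : W -> Prop) :
  (forall w, P w -> ~ card_le X {v | P v /\ R v w}) -> card_le {w | P w} X.
Proof.
move=> H.
case: (EM (inhabited X)) => [iX|nX]; last first.
  exists (fun u => match H _ (proj2_sig u) (ex_intro _ (fun x => match nX (inhabits x) with end) (fun x y _ => match nX (inhabits x) with end)) with end).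
  by move=> [u pu]; case: (H _ pu); exists (fun x => match nX (inhabits x) with end) => x; case: (nX (inhabits x)).
pose f := trec (fun w Rel => epsilon iX (fun x => forall v y, P v -> Rel v y -> y <> x)).
have Hf : forall w, P w -> forall v, P v -> R v w -> f v <> f w.
  move=> w Pw v Pv Rvw; rewrite [f w]trec_eq -/f.
  set Q := (fun x => _).
  have : exists x, Q x.
    apply: NNPP => N; apply: (H w Pw).
    have G : forall x : X, exists u : {v | P v /\ R v w}, f (proj1_sig u) = x.
      move=> x; apply: NNPP => N2; apply: N; exists x => v' y Pv' [Rv' Ey] Exy.
      by apply: N2; exists (exist _ v' (conj Pv' Rv')); rewrite /= Ey.
    have [g Hg] := choice_fun G; exists g => x y E.
    by rewrite -(Hg x) -(Hg y) E.
  move=> /(epsilon_spec iX) HQ; apply: (HQ v (f v) Pv); split => //.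
exists (fun u => f (proj1_sig u)) => [[u pu] [v pv]] /= E; apply: sigE => /=.
case: (tot u v) => [Ruv|[//|Rvu]].
- by case: (Hf v pv u pu Ruv).
- by case: (Hf u pu v pv Rvu).
Qed.

End Rec.


Lemma opt_absorb {A} (e : nat -> A) : inj e -> card_le (option A) A.
Proof.
move=> He.
pose f (o : option A) : A := match o with
  | None => e 0
  | Some x => match excluded_middle_informative (exists n, x = e n) with
              | left H => e (S (proj1_sig (constructive_indefinite_description _ H)))
              | right _ => x end end.
exists f => [[x|] [y|]] /=; rewrite /f.
- case: excluded_middle_informative => [Hx|Nx]; case: excluded_middle_informative => [Hy|Ny].
  + case: (constructive_indefinite_description _ Hx) => n /= ->.
    case: (constructive_indefinite_description _ Hy) => m /= -> /He [->] //.
  + case: (constructive_indefinite_description _ Hx) => n /= -> E.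
    by case: Ny; exists (S n).
  + case: (constructive_indefinite_description _ Hy) => m /= -> E.
    by case: Nx; exists (S m).
  + by move=> ->.
- case: excluded_middle_informative => [Hx|Nx].
  + by case: (constructive_indefinite_description _ Hx) => n /= _ /He.
  + by move=> E; case: Nx; exists 0.
- case: excluded_middle_informative => [Hy|Ny].
  + by case: (constructive_indefinite_description _ Hy) => n /= _ /He.
  + by move=> E; case: Ny; exists 0.
- by [].
Qed.

Section WO.
Variables (L : Type) (lt : L -> L -> Prop) (wo : IsWellOrder lt).

Definition wle a b := a = b \/ lt a b.

Lemma wlt_trans a b c : lt a b -> lt b c -> lt a c.
Proof. exact: (wo_trans wo). Qed.
Lemma wlt_irr a : ~ lt a a.
Proof. exact: (wo_irrefl wo). Qed.
Lemma wlt_tot a b : lt a b \/ a = b \/ lt b a.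
Proof. exact: (wo_total wo). Qed.
Lemma wlt_wf : well_founded lt.
Proof. exact: (wo_wf wo). Qed.
Lemma wle_lt_trans a b c : wle a b -> lt b c -> lt a c.
Proof. by case=> [->//|H] /(wlt_trans H). Qed.
Lemma wlt_le_trans a b c : lt a b -> wle b c -> lt a c.
Proof. by move=> H [<-//|/(wlt_trans H)]. Qed.
Lemma wlt_asym a b : lt a b -> lt b a -> False.
Proof. by move=> H1 H2; apply: (wlt_irr (wlt_trans H1 H2)). Qed.
Lemma wle_trans a b c : wle a b -> wle b c -> wle a c.
Proof. by case=> [->//|H] [<-|H2]; right => //; apply: wlt_trans H H2. Qed.
Lemma not_wlt_wle a b : ~ lt a b -> wle b a.
Proof. by move=> H; case: (wlt_tot a b) => [//|[->|]]; [left|right]. Qed.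

Lemma min_ex (P : L -> Prop) : (exists x, P x) -> exists x, P x /\ forall y, P y -> wle x y.
Proof.
move=> /(wf_min wlt_wf) [x [Px Hx]]; exists x; split => // y Py.
by apply: not_wlt_wle; apply: Hx.
Qed.

Lemma inf_seq (Sp : L -> Prop) : ~ finite_type {x | Sp x} ->
  exists e : nat -> L, (forall n, Sp (e n)) /\ forall n m, n < m -> lt (e n) (e m).
Proof.
move=> HS.
pose St := {P : L -> Prop | ~ finite_type {x | P x}}.
have step : forall s : St, exists p : L * St, proj1_sig s p.1 /\
    forall y, proj1_sig p.2 y -> proj1_sig s y /\ lt p.1 y.
  move=> [P HP] /=.
  have [x [Px Hx]] : exists x, P x /\ forall y, P y -> wle x y.
    apply: min_ex; apply: NNPP => N; apply: HP; apply: fin_none => x Px; apply: N; by exists x.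
  have HP' : ~ finite_type {y | P y /\ lt x y}.
    move=> F; apply: HP; apply: (@fin_union _ _ (fun y => P y /\ lt x y) (fun y => y = x)) => //.
    + by move=> y Py; case: (Hx y Py) => [->|H]; [right|left].
    + exact: fin_single.
  by exists (x, exist (fun Q : L -> Prop => ~ finite_type {y | Q y}) _ HP') => /=; split => // y [].
have [nx Hnx] := choice_fun step.
pose st n := Nat.iter n (fun s => (nx s).2) (exist _ Sp HS : St).
pose e n := (nx (st n)).1.
have Hst : forall n y, proj1_sig (st (S n)) y -> proj1_sig (st n) y /\ lt (e n) y.
  by move=> n y; rewrite /e /=; apply: (proj2 (Hnx (st n))).
have Hsub : forall n k y, proj1_sig (st (k + n)) y -> proj1_sig (st n) y.
  move=> n; elim=> [//|k IH] y /= H.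
  by apply: IH; have [] := Hst (k + n) y H.
have He : forall n, proj1_sig (st n) (e n) by move=> n; apply: (proj1 (Hnx (st n))).
exists e; split.
- by move=> n; apply: (Hsub 0 n); rewrite Nat.add_0_r; apply: He.
- move=> n m Hnm.
  have E : m = (m - S n) + S n by lia.
  have := He m; rewrite {1}E => /Hsub /Hst [].
  by move=> _.
Qed.

Lemma inf_nat (Sp : L -> Prop) : ~ finite_type {x | Sp x} -> card_le nat {x | Sp x}.
Proof.
move=> /inf_seq [e [He Hlt]].
exists (fun n => exist _ (e n) (He n)) => n m E.
have E' : e n = e m by move: (f_equal (@proj1_sig _ _) E).
case: (Nat.lt_trichotomy n m) => [H|[//|H]].
- by exfalso; apply: (@wlt_irr (e m)); rewrite -{1}E'; apply: Hlt.
- by exfalso; apply: (@wlt_irr (e n)); rewrite {1}E'; apply: Hlt.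
Qed.

Lemma inf_opt (Sp : L -> Prop) : ~ finite_type {x | Sp x} -> card_le (option {x | Sp x}) {x | Sp x}.
Proof. by move=> /inf_nat [e He]; apply: (opt_absorb He). Qed.

Definition mx (p : L * L) : L := if excluded_middle_informative (lt p.1 p.2) then p.2 else p.1.

Lemma mx_ge1 p : wle p.1 (mx p).
Proof. by rewrite /mx; case: excluded_middle_informative => H; [right|left]. Qed.
Lemma mx_ge2 p : wle p.2 (mx p).
Proof. by rewrite /mx; case: excluded_middle_informative => H; [left|apply: not_wlt_wle]. Qed.
Lemma mx_in p : mx p = p.1 \/ mx p = p.2.
Proof. by rewrite /mx; case: excluded_middle_informative => H; [right|left]. Qed.

Definition Gd (p q : L * L) : Prop :=
  lt (mx p) (mx q) \/ (mx p = mx q /\ (lt p.1 q.1 \/ (p.1 = q.1 /\ lt p.2 q.2))).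

Lemma Gd_wf : well_founded Gd.
Proof.
suff H : forall m a b, mx (a, b) = m -> Acc Gd (a, b) by move=> [a b]; apply: (H _ a b erefl).
move=> m; elim/(well_founded_ind wlt_wf): m => m IHm a.
elim/(well_founded_ind wlt_wf): a => a IHa b.
elim/(well_founded_ind wlt_wf): b => b IHb Hm.
constructor => [[a' b']] [H|[Heq [H|[H1 H2]]]] /=.
- by apply: (IHm (mx (a', b'))) => //; rewrite -Hm.
- by apply: (IHa a' H b'); rewrite Heq.
- by simpl in H1; subst a'; apply: (IHb b' H2); rewrite Heq.
Qed.

Lemma Gd_tot p q : Gd p q \/ p = q \/ Gd q p.
Proof.
case: p q => [a b] [c d]; rewrite /Gd /=.
case: (wlt_tot (mx (a, b)) (mx (c, d))) => [H|[E|H]]; [by left; left| |by right; right; left].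
case: (wlt_tot a c) => [H|[E2|H]]; [by left; right; split => //; left| |by right; right; right; split => //; left].
subst c; case: (wlt_tot b d) => [H|[E3|H]]; [by left; right; split => //; right| by subst; right; left|].
by right; right; right; split => //; right.
Qed.

Definition seg (w : L) := {v | lt v w}.

Lemma seg_sub v w : lt v w -> card_le (seg v) (seg w).
Proof. by move=> H; apply: cl_sub => x Hx; apply: wlt_trans Hx H. Qed.

Theorem hessenberg : forall w, ~ finite_type (seg w) -> card_le (seg w * seg w) (seg w).
Proof.
move=> w; elim/(well_founded_ind wlt_wf): w => w IH Hinf.
case: (EM (exists v, lt v w /\ card_le (seg w) (seg v))) => [[v [Hvw Hle]]|Hno].
- have Hvinf : ~ finite_type (seg v) by move=> F; apply: Hinf; apply: fin_cl Hle F.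
  apply: cl_trans (cl_prod Hle Hle) _; apply: cl_trans (IH v Hvw Hvinf) _.
  exact: seg_sub.
- have Hno' : forall v, lt v w -> ~ card_le (seg w) (seg v) by move=> v H1 H2; apply: Hno; exists v.
  pose P := fun p : L * L => lt p.1 w /\ lt p.2 w.
  have G : card_le {p | P p} (seg w).
    apply: (greedy Gd_wf Gd_tot) => p [Hp1 Hp2] Hle.
    pose m := mx p.
    have Hm : lt m w by rewrite /m; case: (mx_in p) => ->.
    have [v [Hmv Hvw]] : exists v, lt m v /\ lt v w.
      apply: NNPP => N.
      have Hcov : forall u, lt u w -> u = m \/ lt u m.
        move=> u Hu; case: (wlt_tot u m) => [H|[H|H]]; [by right|by left|].
        by case: N; exists u.
      have Hopt : card_le (seg w) (option (seg m)).
        have G2 : forall u : seg w, exists o : option (seg m),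
            match o with None => proj1_sig u = m | Some x => proj1_sig x = proj1_sig u end.
          move=> [u Hu] /=; case: (Hcov u Hu) => [E|H]; [by exists None | by exists (Some (exist _ u H))].
        have [g Hg] := choice_fun G2; exists g => x y E; apply: sigE.
        move: (Hg x) (Hg y); rewrite E; case: (g y) => [?|] -> -> //.
      case: (EM (finite_type (seg m))) => [F|NF].
      + by apply: Hinf; apply: fin_cl Hopt (fin_option F).
      + by apply: (Hno' m Hm); apply: cl_trans Hopt (@inf_opt (fun x => lt x m) NF).
    have Hq : forall u : {q | P q /\ Gd q p}, lt (proj1_sig u).1 v /\ lt (proj1_sig u).2 v.
      move=> [q [_ Hg]] /=.
      have Hmq : wle (mx q) m.
        case: Hg => [H|[E _]]; [by right|by left].
      split; apply: wle_lt_trans Hmv; [apply: wle_trans (mx_ge1 q) Hmq | apply: wle_trans (mx_ge2 q) Hmq].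
    have H2 : card_le {q | P q /\ Gd q p} (seg v * seg v).
      exists (fun u => (exist (fun x => lt x v) _ (proj1 (Hq u)), exist (fun x => lt x v) _ (proj2 (Hq u)))) => x y [E1 E2].
      apply: sigE; move: E1 E2.
      by case: (proj1_sig x) (proj1_sig y) => ? ? [? ?] /= -> ->.
    case: (EM (finite_type (seg v))) => [F|NF].
    + by apply: Hinf; apply: fin_cl (cl_trans Hle H2) (fin_prod F F).
    + by apply: (Hno' v Hvw); apply: cl_trans Hle (cl_trans H2 (IH v Hvw NF)).
  apply: cl_trans _ G.
  exists (fun uv => exist P (proj1_sig uv.1, proj1_sig uv.2) (conj (proj2_sig uv.1) (proj2_sig uv.2))).
  move=> [x y] [x' y'] E; move: (f_equal (@proj1_sig _ _) E) => /= [E1 E2].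
  by rewrite (sigE x x' E1) (sigE y y' E2).
Qed.

End WO.

Arguments wlt_trans [L lt] wo [a b c].
Arguments wlt_irr [L lt] wo [a].
Arguments wlt_asym [L lt] wo [a b].
Arguments wle_lt_trans [L lt] wo [a b c].
Arguments wlt_le_trans [L lt] wo [a b c].
Arguments wle_trans [L lt] wo [a b c].
Arguments not_wlt_wle [L lt] wo [a b].


Definition decb (P : Prop) : bool := if excluded_middle_informative P then true else false.
Lemma decbP (P : Prop) : decb P = true <-> P.
Proof. by rewrite /decb; case: excluded_middle_informative. Qed.

Lemma cl_restr {T X} (P : T -> Prop) (f : T -> X) :
  (forall x y, P x -> P y -> f x = f y -> x = y) -> card_le {x | P x} X.
Proof. by move=> H; exists (fun u => f (proj1_sig u)) => [[x px] [y py]] /= E; apply: sigE; apply: H. Qed.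

Lemma cl_total {T X} (P : T -> Prop) (x0 : X) : card_le {x | P x} X ->
  exists f : T -> X, forall x y, P x -> P y -> f x = f y -> x = y.
Proof.
move=> [g Hg].
exists (fun x => match excluded_middle_informative (P x) with left h => g (exist _ x h) | right _ => x0 end).
move=> x y px py; case: excluded_middle_informative => // hx; case: excluded_middle_informative => // hy.
by move=> /Hg E; move: (f_equal (@proj1_sig _ _) E).
Qed.

Lemma fin_total {T} (P : T -> Prop) : finite_type {x | P x} ->
  exists n (f : T -> nat), (forall x y, P x -> P y -> f x = f y -> x = y) /\ forall x, P x -> f x < n.
Proof.
move=> [n [g [Hg Hb]]]; exists n.
exists (fun x => match excluded_middle_informative (P x) with left h => g (exist _ x h) | right _ => 0 end).
split.
- move=> x y px py; case: excluded_middle_informative => // hx; case: excluded_middle_informative => // hy.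
  by move=> /Hg E; move: (f_equal (@proj1_sig _ _) E).
- by move=> x px; case: excluded_middle_informative.
Qed.

Lemma fin_restr {T} (P : T -> Prop) n (f : T -> nat) :
  (forall x y, P x -> P y -> f x = f y -> x = y) -> (forall x, P x -> f x < n) -> finite_type {x | P x}.
Proof.
move=> H1 H2; exists n, (fun u => f (proj1_sig u)); split.
- by move=> [x px] [y py] /= E; apply: sigE; apply: H1.
- by move=> [x px]; apply: H2.
Qed.

Lemma cl_push A K : card_le A K -> card_le (A -> Prop) (K -> bool).
Proof.
move=> [p Hp]; exists (fun Q k => decb (exists a, p a = k /\ Q a)) => Q1 Q2 E.
apply: functional_extensionality => a; apply: propositional_extensionality.
have E' := f_equal (fun F => F (p a)) E; simpl in E'.
split => H.
- have : decb (exists a', p a' = p a /\ Q1 a') = true by apply/decbP; exists a.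
  rewrite E' => /decbP [a' [/Hp -> //]].
- have : decb (exists a', p a' = p a /\ Q2 a') = true by apply/decbP; exists a.
  rewrite -E' => /decbP [a' [/Hp -> //]].
Qed.

Lemma cl_bool_prop A : card_le (A -> bool) (A -> Prop).
Proof.
exists (fun f a => f a = true) => f g E; apply: functional_extensionality => a.
have E' := f_equal (fun F => F a) E; simpl in E'.
case Hf: (f a); case Hg: (g a) => //.
- by move: E'; rewrite Hf Hg => E''; have : true = true by []; rewrite E''.
- by move: E'; rewrite Hf Hg => E''; have : true = true by []; rewrite -E''.
Qed.

Lemma cantor K : ~ card_le ((K -> bool) -> bool) (K -> bool).
Proof.
move=> [f Hf].
pose D := fun b : K -> bool => negb (decb (exists p, f p = b /\ p b = true)).
case Hd: (D (f D)).
- have H : decb (exists p, f p = f D /\ p (f D) = true) = true by apply/decbP; exists D.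
  by move: Hd; rewrite /D H.
- move: (Hd); rewrite /D => /negbFE /decbP [p [/Hf E Hp]].
  rewrite E in Hp; change (D (f D) = true) in Hp; by rewrite Hp in Hd.
Qed.

Fixpoint enc (f : nat -> bool) (n : nat) : nat :=
  match n with 0 => 0 | S n => enc f n + (if f n then 2 ^ n else 0) end.

Lemma enc_lt f n : enc f n < 2 ^ n.
Proof. elim: n => [|n IH] /=; first lia. case: (f n); lia. Qed.

Lemma enc_inj f g n : enc f n = enc g n -> forall i, i < n -> f i = g i.
Proof.
elim: n => [|n IH] /= E i Hi; first lia.
have Hf := enc_lt f n; have Hg := enc_lt g n.
have Efn : f n = g n.
  move: E; case: (f n); case: (g n) => //= E; lia.
have E2 : enc f n = enc g n by move: E; rewrite Efn; case: (g n); lia.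
case: (Nat.eq_dec i n) => [->//|Hin]; apply: IH => //; lia.
Qed.

Lemma finB K : finite_type K -> finite_type (K -> bool).
Proof.
move=> [n [e [He Hb]]].
exists (2 ^ n), (fun p => enc (fun i => decb (exists k, e k = i /\ p k = true)) n); split; last first.
  by move=> p; apply: enc_lt.
move=> p q E; apply: functional_extensionality => k.
have := @enc_inj _ _ n E (e k) (Hb k) => /=.
case Hp: (p k); case Hq: (q k) => //.
- have : decb (exists k0, e k0 = e k /\ p k0 = true) = true by apply/decbP; exists k.
  move=> ->; move/esym/decbP => [k' [/He -> ]]; by rewrite Hq.
- have : decb (exists k0, e k0 = e k /\ q k0 = true) = true by apply/decbP; exists k.
  move=> ->; move/decbP => [k' [/He -> ]]; by rewrite Hp.
Qed.

Lemma bool_prop_eq (a b : bool) : (a = true) = (b = true) -> a = b.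
Proof.
case: a; case: b => // H.
- by have : true = true by []; rewrite H.
- by have : true = true by []; rewrite -H.
Qed.

Lemma fin_nat_le A : finite_type A -> card_le A nat.
Proof. by move=> [n [f [Hf _]]]; exists f. Qed.

Section KInf.
Variable K : Type.
Hypothesis Kinf : ~ finite_type K.

Lemma K_wo : exists lt : K -> K -> Prop, IsWellOrder lt.
Proof. exact: WO_exists. Qed.

Lemma K_nat : card_le nat K.
Proof.
have [lt wo] := K_wo.
apply: cl_trans (cl_Tsig K); apply: (@inf_nat K lt wo (fun _ => True)).
by move=> F; apply: Kinf; apply: fin_cl F; apply: cl_sigT.
Qed.

Definition olt (lt : K -> K -> Prop) (a b : option K) : Prop := match a, b with
  | Some x, Some y => lt x y | Some _, None => True | _, _ => False end.

Lemma olt_wo lt : IsWellOrder lt -> IsWellOrder (olt lt).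
Proof.
move=> wo; split.
- move=> [a|]; rewrite /olt; [exact: (wo_irrefl wo)|by []].
- move=> [a|] [b|] [c|]; rewrite /olt //; exact: (wo_trans wo).
- move=> [a|] [b|]; rewrite /olt.
  + by case: (wo_total wo a b) => [H|[->|H]]; [left|right; left|right; right].
  + by left.
  + by right; right.
  + by right; left.
- have accS : forall a, Acc (olt lt) (Some a).
    move=> a; elim/(well_founded_ind (wo_wf wo)): a => a IH.
    constructor => y; case: y => [b|] H; last by case: H.
    by apply: IH.
  move=> [a|]; first exact: accS.
  constructor => y; case: y => [b|] H; last by case: H.
  exact: accS.
Qed.

Lemma K_sq : card_le (K * K) K.
Proof.
have [lt wo] := K_wo.
have owo := olt_wo wo.
have H1 : card_le K (seg (olt lt) None).
  by exists (fun k => exist (fun x => olt lt x None) (Some k) I) => x y E; move: (f_equal (@proj1_sig _ _) E) => [].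
have H2 : card_le (seg (olt lt) None) K.
  have G : forall u : seg (olt lt) None, exists k, proj1_sig u = Some k.
    by move=> [[k|] h] //=; exists k.
  have [g Hg] := choice_fun G; exists g => x y E; apply: sigE; by rewrite Hg (Hg y) E.
have Hinf : ~ finite_type (seg (olt lt) None) by move=> F; apply: Kinf; apply: fin_cl H1 F.
apply: cl_trans (cl_prod H1 H1) _; apply: cl_trans (hessenberg owo Hinf) H2.
Qed.

Lemma K_two : exists k0 k1 : K, k0 <> k1.
Proof.
have [e He] := K_nat; exists (e 0), (e 1) => /He; lia.
Qed.

Lemma K_sum : card_le (K + K) K.
Proof.
have [k0 [k1 Hk]] := K_two.
apply: cl_trans K_sq.
exists (fun s => match s with inl k => (k, k0) | inr k => (k, k1) end).
by move=> [a|a] [b|b] [] // -> // /esym.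
Qed.

Definition BB := K -> bool.

Lemma B_sq : card_le (BB * BB) BB.
Proof.
apply: cl_trans (cl_push K_sum).
exists (fun fg s => match s with inl k => fg.1 k = true | inr k => fg.2 k = true end).
move=> [f g] [f' g'] E.
have E1 : f = f'.
  apply: functional_extensionality => k; have := f_equal (fun F => F (inl k)) E => /= E'.
  exact: bool_prop_eq E'.
have E2 : g = g'.
  apply: functional_extensionality => k; have := f_equal (fun F => F (inr k)) E => /= E'.
  exact: bool_prop_eq E'.
by rewrite E1 E2.
Qed.

Lemma K_B : card_le K BB.
Proof.
exists (fun k k' => decb (k = k')) => x y E.
have := f_equal (fun F => F y) E => /=.
have -> : decb (y = y) = true by apply/decbP.
by move/decbP.
Qed.

Lemma nat_B : card_le nat BB.
Proof. exact: cl_trans K_nat K_B. Qed.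

End KInf.


Definition Small (K : Type) {T} (P : T -> Prop) :=
  finite_type {x | P x} \/ card_le {x | P x} (K -> bool).

Lemma cl_union {T} (P Q : T -> Prop) : card_le {x | P x \/ Q x} ({x | P x} + {x | Q x}).
Proof.
have G : forall u : {x | P x \/ Q x}, exists v : ({x | P x} + {x | Q x})%type,
    match v with inl q => proj1_sig q = proj1_sig u | inr r => proj1_sig r = proj1_sig u end.
  move=> [x [q|r]]; [exists (inl (exist _ x q)) | exists (inr (exist _ x r))] => //.
have [f Hf] := choice_fun G; exists f => u v E.
apply: sigE; move: (Hf u) (Hf v); rewrite E; case: (f v) => ? -> -> //.
Qed.

Lemma cl_prodsig {T U} (P : T -> Prop) (Q : U -> Prop) :
  card_le {z : T * U | P z.1 /\ Q z.2} ({x | P x} * {y | Q y}).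
Proof.
exists (fun u => (exist P _ (proj1 (proj2_sig u)), exist Q _ (proj2 (proj2_sig u)))).
move=> [[a b] h] [[c d] h'] /= [E1 E2]; apply: sigE => /=; by rewrite E1 E2.
Qed.

Section Sm.
Variable K : Type.

Lemma small_cl {T U} (P : T -> Prop) (Q : U -> Prop) :
  card_le {x | P x} {y | Q y} -> Small K Q -> Small K P.
Proof. by move=> H [F|H2]; [left; apply: fin_cl H F | right; apply: cl_trans H H2]. Qed.

Lemma small_sub {T} (P Q : T -> Prop) : (forall x, P x -> Q x) -> Small K Q -> Small K P.
Proof. by move=> H; apply: small_cl; apply: cl_sub. Qed.

Lemma small_fin {T} (P : T -> Prop) : finite_type {x | P x} -> Small K P.
Proof. by left. Qed.

Lemma small_finK {T} (P : T -> Prop) : finite_type K -> Small K P -> finite_type {x | P x}.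
Proof. by move=> FK [//|H]; apply: fin_cl H (finB FK). Qed.

Lemma small_infK {T} (P : T -> Prop) : ~ finite_type K -> Small K P -> card_le {x | P x} (K -> bool).
Proof.
move=> NK [F|//]; exact: (cl_trans (fin_nat_le F) (@nat_B K NK)).
Qed.

Lemma small_union2 {T} (P Q : T -> Prop) : Small K P -> Small K Q -> Small K (fun x => P x \/ Q x).
Proof.
move=> HP HQ; case: (EM (finite_type K)) => [FK|NK].
- left; apply: fin_cl (cl_union P Q) (fin_sum (small_finK FK HP) (small_finK FK HQ)).
- right; apply: cl_trans (cl_union P Q) _.
  apply: cl_trans (cl_sum (small_infK NK HP) (small_infK NK HQ)) _.
  apply: cl_trans (@B_sq K NK).
  have [k0 _] := @K_two K NK.
  exists (fun s => match s with inl f => (f, fun _ => true) | inr g => (g, fun _ => false) end).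
  move=> [f|f] [g|g] [] -> // E.
  + by have := f_equal (fun h => h k0) E.
  + by have := f_equal (fun h => h k0) E.
Qed.

Lemma small_prod {T U} (P : T -> Prop) (Q : U -> Prop) :
  Small K P -> Small K Q -> Small K (fun z : T * U => P z.1 /\ Q z.2).
Proof.
move=> HP HQ; case: (EM (finite_type K)) => [FK|NK].
- left; apply: fin_cl (cl_prodsig P Q) (fin_prod (small_finK FK HP) (small_finK FK HQ)).
- right; apply: cl_trans (cl_prodsig P Q) _.
  apply: cl_trans (cl_prod (small_infK NK HP) (small_infK NK HQ)) (@B_sq K NK).
Qed.

Lemma small_img {T U} (P : T -> Prop) (f : T -> U) :
  Small K P -> Small K (fun y => exists x, P x /\ y = f x).
Proof. by apply: small_cl; apply: cl_img. Qed.

Lemma small_unionK {T} (P : K -> T -> Prop) :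
  (forall i, Small K (P i)) -> Small K (fun x => exists i, P i x).
Proof.
move=> HP.
have G : forall u : {x | exists i, P i x}, exists i, P i (proj1_sig u) by move=> [x [i h]]; exists i.
have [ix Hix] := choice_fun G.
case: (EM (finite_type K)) => [FK|NK].
- have G2 : forall i, exists nf : nat * (T -> nat),
      (forall x y, P i x -> P i y -> nf.2 x = nf.2 y -> x = y) /\ forall x, P i x -> nf.2 x < nf.1.
    move=> i; have [n [f Hf]] := fin_total _ (small_finK FK (HP i)); by exists (n, f).
  have [nf Hnf] := choice_fun G2.
  have [M HM] := fin_bound (fun i => (nf i).1) FK.
  left; apply: (fin_cl (B := (K * {m | m < M})%type)); last first.
    apply: fin_prod => //; exists M, (@proj1_sig _ _); split; last by move=> [m h].
    by move=> u v; apply: sigE.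
  have Hb : forall u, (nf (ix u)).2 (proj1_sig u) < M.
    move=> u; have := proj2 (Hnf (ix u)) _ (Hix u); have := HM (ix u); lia.
  exists (fun u => (ix u, exist (fun m => m < M) _ (Hb u))) => u v [E1 E2].
  apply: sigE; apply: (proj1 (Hnf (ix u))) => //.
  + by rewrite E1; apply: Hix.
  + by rewrite {2}E1.
- have G2 : forall i, exists f : T -> (K -> bool),
      forall x y, P i x -> P i y -> f x = f y -> x = y.
    by move=> i; apply: (cl_total _ (fun _ => true)); apply: small_infK.
  have [f Hf] := choice_fun G2.
  have HKB : card_le (K * (K -> bool)) (K -> bool) := cl_trans (cl_prod (@K_B K) (cl_refl (K -> bool))) (@B_sq K NK).
  right; apply: (cl_trans _ HKB).
  exists (fun u => (ix u, f (ix u) (proj1_sig u))) => u v [E1 E2].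
  apply: sigE; apply: (Hf (ix u)) => //.
  + by rewrite E1; apply: Hix.
  + by rewrite {2}E1.
Qed.

End Sm.


Section Tree.
Variables (K L : Type) (lt : L -> L -> Prop) (wo : IsWellOrder lt) (F : L -> L -> K).

Definition T : L -> L -> Prop :=
  trec (wlt_wf wo) (fun a R b => lt b a /\ forall S, R b S -> forall z, S z -> F z b = F z a).

Lemma T_eq a b : T a b <-> lt b a /\ forall z, T b z -> F z b = F z a.
Proof.
rewrite {1}/T trec_eq -/T; split.
- by move=> [H1 H2]; split => // z Hz; apply: (H2 (T b)) => //.
- by move=> [H1 H2]; split => // S [_ <-]; apply: H2.
Qed.

Lemma T_lt {a b} : T a b -> lt b a.
Proof. by move/T_eq => []. Qed.

Lemma T_trans {a b z} : T a b -> T b z -> T a z.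
Proof.
move: a b; elim/(well_founded_ind (wo_wf wo)): z => z IH a b Hab Hbz.
apply/(T_eq a z); split; first exact: (wlt_trans wo (T_lt Hbz) (T_lt Hab)).
move=> w Hzw.
have Hbw : T b w by apply: (IH w (T_lt Hzw) b z).
rewrite (proj2 (proj1 (T_eq b z) Hbz) w Hzw).
exact: (proj2 (proj1 (T_eq a b) Hab) w Hbw).
Qed.

Lemma T_seg a z' : T a z' -> forall w, T z' w <-> T a w /\ lt w z'.
Proof.
move=> Haz' w; split.
- by move=> H; split; [apply: T_trans Haz' H | apply: T_lt].
- elim/(well_founded_ind (wo_wf wo)): w => w IH [Haw Hwz'].
  apply/T_eq; split => // v Hwv.
  have Hav : T a v by apply: T_trans Haw Hwv.
  have Hz'v : T z' v by apply: IH (T_lt Hwv) _; split => //; exact: (wlt_trans wo (T_lt Hwv) Hwz').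
  rewrite (proj2 (proj1 (T_eq a w) Haw) v Hwv).
  by rewrite (proj2 (proj1 (T_eq a z') Haz') v Hz'v).
Qed.

Lemma T_node a a' : (forall z, T a z <-> T a' z) -> (forall z, T a z -> F z a = F z a') -> a = a'.
Proof.
move=> HT HF.
case: (wlt_tot wo a a') => [H|[//|H]].
- have : T a' a by apply/T_eq; split => // z /(HF z).
  by move/HT => /T_lt /(wlt_irr wo).
- have : T a a' by apply/T_eq; split => // z Hz; rewrite HF //; apply/HT.
  by move/HT => /T_lt /(wlt_irr wo).
Qed.

Hypothesis NK : ~ finite_type K.

Lemma tree_main : ~ card_le L (K -> bool) -> exists a j, ~ finite_type {z | T a z /\ F z a = j}.
Proof.
move=> NL; apply: NNPP => N.
have Hfib : forall a j, finite_type {z | T a z /\ F z a = j}.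
  by move=> a j; apply: NNPP => N2; apply: N; exists a, j.
have [k0 [k1 Hk]] := @K_two K NK.
have HTK : forall a, card_le {z | T a z} K.
  move=> a.
  have G : forall j, exists f : L -> nat, forall x y, T a x /\ F x a = j -> T a y /\ F y a = j -> f x = f y -> x = y.
    by move=> j; have [n [f [Hf _]]] := fin_total _ (Hfib a j); exists f.
  have [f Hf] := choice_fun G.
  apply: (cl_trans _ (cl_trans (cl_prod (cl_refl K) (@K_nat K NK)) (@K_sq K NK))).
  apply: (cl_restr _ (fun z => (F z a, f (F z a) z))) => x y Hx Hy [E1 E2].
  apply: (Hf (F x a) x y); [by split | by split | by rewrite E2 E1].
have G2 : forall a, exists f : L -> K, forall x y, T a x -> T a y -> f x = f y -> x = y.
  by move=> a; apply: (cl_total _ k0); apply: HTK.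
have [io Hio] := choice_fun G2.
pose code (a : L) (t : (bool * K) * K) : Prop :=
  match t with
  | ((true, k), k') => exists z z', T a z /\ T a z' /\ io a z = k /\ io a z' = k' /\ lt z z'
  | ((false, k), k') => exists z, T a z /\ io a z = k /\ F z a = k'
  end.
have Hcode : forall a a', code a = code a' -> a = a'.
  move=> a a' Ec.
  have Cf : forall k k', (exists z, T a z /\ io a z = k /\ F z a = k') <-> (exists z, T a' z /\ io a' z = k /\ F z a' = k').
    by move=> k k'; have := f_equal (fun C => C ((false, k), k')) Ec => /= ->.
  have Ct : forall k k', (exists z z', T a z /\ T a z' /\ io a z = k /\ io a z' = k' /\ lt z z') <->
                         (exists z z', T a' z /\ T a' z' /\ io a' z = k /\ io a' z' = k' /\ lt z z').
    by move=> k k'; have := f_equal (fun C => C ((true, k), k')) Ec => /= ->.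
  have claim : forall z, T a z -> forall z', T a' z' -> io a z = io a' z' -> z = z'.
    move=> z; elim/(well_founded_ind (wo_wf wo)): z => z IH Hz z' Hz' Ei.
    have Hw : forall w, T z w -> T a' w /\ F w a' = F w a /\ io a' w = io a w.
      move=> w Hzw; have Haw := T_trans Hz Hzw.
      have [w' [Hw' [Ew' Fw']]] := proj1 (Cf (io a w) (F w a)) (ex_intro _ w (conj Haw (conj erefl erefl))).
      have Eww' := IH w (T_lt Hzw) Haw w' Hw' (esym Ew').
      by subst w'.
    have Hdir : forall w, T z w -> T z' w.
      move=> w Hzw; have [Ha'w [_ Eio]] := Hw w Hzw.
      apply/(T_seg _ _ Hz' w); split => //.
      have [u [u' [Hu [Hu' [Eu [Eu' Luu']]]]]] := proj1 (Ct (io a w) (io a z))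
        (ex_intro _ w (ex_intro _ z (conj (T_trans Hz Hzw) (conj Hz (conj erefl (conj erefl (T_lt Hzw))))))).
      have Eu'z' : u' = z' by apply: (Hio a') => //; rewrite Eu' Ei.
      have Euw : u = w by apply: (Hio a') => //; rewrite Eu Eio.
      by rewrite -Eu'z' -Euw.
    apply: T_node.
    - move=> w; split; first exact: Hdir.
      move=> Hz'w; have Ha'w := T_trans Hz' Hz'w.
      have [w0 [Hw0 [Ew0 Fw0]]] := proj2 (Cf (io a' w) (F w a')) (ex_intro _ w (conj Ha'w (conj erefl erefl))).
      have [u [u' [Hu [Hu' [Eu [Eu' Luu']]]]]] := proj2 (Ct (io a' w) (io a' z'))
        (ex_intro _ w (ex_intro _ z' (conj Ha'w (conj Hz' (conj erefl (conj erefl (T_lt Hz'w))))))).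
      have Eu'z : u' = z by apply: (Hio a) => //; rewrite Eu' Ei.
      have Euw0 : u = w0 by apply: (Hio a) => //; rewrite Eu Ew0.
      have Lw0z : lt w0 z by rewrite -Euw0 -Eu'z.
      have Ew0w : w0 = w := IH w0 Lw0z Hw0 w Ha'w Ew0.
      by apply/(T_seg _ _ Hz w); rewrite -Ew0w.
    - move=> w Hzw.
      rewrite (proj2 (proj1 (T_eq a z) Hz) w Hzw).
      rewrite (proj2 (proj1 (T_eq a' z') Hz') w (Hdir w Hzw)).
      by have [_ [-> _]] := Hw w Hzw.
  apply: T_node.
  - move=> z; split.
    + move=> Hz.
      have [z' [Hz' [Ez' _]]] := proj1 (Cf (io a z) (F z a)) (ex_intro _ z (conj Hz (conj erefl erefl))).
      by rewrite (claim z Hz z' Hz' (esym Ez')).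
    + move=> Hz.
      have [z0 [Hz0 [Ez0 _]]] := proj2 (Cf (io a' z) (F z a')) (ex_intro _ z (conj Hz (conj erefl erefl))).
      by rewrite -(claim z0 Hz0 z Hz Ez0).
  - move=> z Hz.
    have [z' [Hz' [Ez' Fz']]] := proj1 (Cf (io a z) (F z a)) (ex_intro _ z (conj Hz (conj erefl erefl))).
    have E := claim z Hz z' Hz' (esym Ez').
    by rewrite -Fz' E.
have HbK : card_le bool K.
  exists (fun b : bool => if b then k0 else k1); move=> [] [] //= E; by case: Hk.
have HbKK : card_le ((bool * K) * K) K.
  apply: (cl_trans _ (@K_sq K NK)); apply: cl_prod (cl_refl K).
  exact: (cl_trans (cl_prod HbK (cl_refl K)) (@K_sq K NK)).
apply: NL; apply: (cl_trans _ (cl_push HbKK)).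
by exists code.
Qed.

End Tree.


Lemma strict_inj {L} (lt : L -> L -> Prop) (wo : IsWellOrder lt) (x : nat -> L) :
  (forall n m, n < m -> lt (x n) (x m)) -> forall n m, lt (x n) (x m) -> n < m.
Proof.
move=> Hx n m H; case: (Nat.lt_trichotomy n m) => [//|[E|E]].
- by subst; case: (wlt_irr wo H).
- by case: (wlt_asym wo H (Hx _ _ E)).
Qed.

Lemma ramsey (K L : Type) (lt : L -> L -> Prop) (wo : IsWellOrder lt) (F : L -> L -> K) :
  finite_type K -> ~ finite_type L ->
  exists j (H : L -> Prop), ~ finite_type {x | H x} /\
    forall z z', H z -> H z' -> lt z z' -> F z z' = j.
Proof.
move=> FK NL.
pose St := {P : L -> Prop | ~ finite_type {x | P x}}.
have step : forall s : St, exists p : (L * K) * St, proj1_sig s p.1.1 /\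
    forall y, proj1_sig p.2 y -> proj1_sig s y /\ lt p.1.1 y /\ F p.1.1 y = p.1.2.
  move=> [P HP] /=.
  have [x [Px Hx]] : exists x, P x /\ forall y, P y -> wle lt x y.
    apply: (min_ex wo); apply: NNPP => N; apply: HP; apply: fin_none => x Px; apply: N; by exists x.
  have [j Hj] : exists j, ~ finite_type {y | P y /\ lt x y /\ F x y = j}.
    apply: NNPP => N.
    have Hall : forall j, finite_type {y | P y /\ lt x y /\ F x y = j}.
      by move=> j; apply: NNPP => N2; apply: N; exists j.
    have HU : finite_type {y | exists j, P y /\ lt x y /\ F x y = j}.
      apply: (small_finK (K := K)) => //; apply: small_unionK => j; apply: small_fin; apply: Hall.
    apply: HP; apply: (@fin_union _ _ (fun y => exists j, P y /\ lt x y /\ F x y = j) (fun y => y = x)) => //.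
    + move=> y Py; case: (Hx y Py) => [->|H]; [by right|left].
      by exists (F x y).
    + exact: fin_single.
  by exists ((x, j), exist (fun Q : L -> Prop => ~ finite_type {y | Q y}) _ Hj) => /=; split.
have [nx Hnx] := choice_fun step.
have HL : ~ finite_type {x : L | True} by move=> Fn; apply: NL; apply: fin_cl Fn; apply: cl_sigT.
pose st n := Nat.iter n (fun s => (nx s).2) (exist (fun Q : L -> Prop => ~ finite_type {y | Q y}) _ HL : St).
pose x n := (nx (st n)).1.1.
pose jj n := (nx (st n)).1.2.
have Hst : forall n y, proj1_sig (st (S n)) y -> proj1_sig (st n) y /\ lt (x n) y /\ F (x n) y = jj n.
  by move=> n y; rewrite /x /jj /=; apply: (proj2 (Hnx (st n))).
have Hsub : forall n k y, proj1_sig (st (k + n)) y -> proj1_sig (st n) y.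
  move=> n; elim=> [//|k IH] y /= H.
  by apply: IH; have [] := Hst (k + n) y H.
have He : forall n, proj1_sig (st n) (x n) by move=> n; apply: (proj1 (Hnx (st n))).
have Hinc : forall n m, n < m -> lt (x n) (x m) /\ F (x n) (x m) = jj n.
  move=> n m Hnm.
  have E : m = (m - S n) + S n by lia.
  have := He m; rewrite {1}E => /Hsub /Hst [_ H].
  exact: H.
have [k Hk] : exists k, ~ finite_type {n | jj n = k}.
  apply: NNPP => N.
  have Hall : forall k, finite_type {n | jj n = k}.
    by move=> k; apply: NNPP => N2; apply: N; exists k.
  have HU : finite_type {n | exists k, jj n = k}.
    apply: (small_finK (K := K)) => //; apply: small_unionK => j; apply: small_fin; apply: Hall.
  apply: nat_not_finite; apply: fin_cl HU.
  by exists (fun n => exist _ n (ex_intro _ (jj n) erefl)) => a b E; move: (f_equal (@proj1_sig _ _) E).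
exists k, (fun z => exists n, jj n = k /\ z = x n); split.
- move=> Fn; apply: Hk; apply: fin_cl Fn.
  exists (fun u => exist (fun z => exists n, jj n = k /\ z = x n) (x (proj1_sig u)) (ex_intro _ (proj1_sig u) (conj (proj2_sig u) erefl))).
  move=> [a ha] [b hb] E; apply: sigE => /=.
  have E' : x a = x b by move: (f_equal (@proj1_sig _ _) E).
  case: (Nat.lt_trichotomy a b) => [H|[//|H]].
  + by exfalso; apply: (@wlt_irr _ _ wo (x b)); rewrite -{1}E'; apply: (proj1 (Hinc _ _ H)).
  + by exfalso; apply: (@wlt_irr _ _ wo (x a)); rewrite {1}E'; apply: (proj1 (Hinc _ _ H)).
- move=> z z' [n [Hn ->]] [m [Hm ->]] Hlt.
  have Hnm := @strict_inj _ lt wo x (fun a b H => proj1 (Hinc a b H)) n m Hlt.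
  by rewrite (proj2 (Hinc _ _ Hnm)).
Qed.

Lemma hom (K L : Type) (lt : L -> L -> Prop) (wo : IsWellOrder lt) (F : L -> L -> K) :
  ~ finite_type L -> ~ card_le L (K -> bool) ->
  exists j (H : L -> Prop), ~ finite_type {x | H x} /\
    forall z z', H z -> H z' -> lt z z' -> F z z' = j.
Proof.
move=> NL NB; case: (EM (finite_type K)) => [FK|NK]; first exact: ramsey.
have [a [j Hj]] := tree_main wo F NK NB.
exists j, (fun z => T wo F a z /\ F z a = j); split => // z z' [Hz Fz] [Hz' Fz'] Hlt.
have Hz'z : T wo F z' z by apply/(T_seg wo F a z' Hz' z).
by rewrite (proj2 (proj1 (T_eq wo F a z') Hz') z Hz'z).
Qed.


Section Grp.
Variables (G : Type) (mul : G -> G -> G) (one : G) (inv : G -> G) (Hg : IsGroup mul one inv).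

Lemma mulA x y z : mul x (mul y z) = mul (mul x y) z.
Proof. exact: (grp_assoc Hg). Qed.
Lemma mul1g x : mul one x = x.
Proof. exact: (grp_mul1g Hg). Qed.
Lemma mulVg x : mul (inv x) x = one.
Proof. exact: (grp_mulVg Hg). Qed.
Lemma mulgV x : mul x (inv x) = one.
Proof.
rewrite -[mul x (inv x)]mul1g -{1}(mulVg (inv x)) -mulA (mulA (inv x) x) mulVg mul1g.
exact: mulVg.
Qed.
Lemma mulg1 x : mul x one = x.
Proof. by rewrite -(mulVg x) mulA mulgV mul1g. Qed.
Lemma mulKg x y : mul (inv x) (mul x y) = y.
Proof. by rewrite mulA mulVg mul1g. Qed.
Lemma mulKVg x y : mul x (mul (inv x) y) = y.
Proof. by rewrite mulA mulgV mul1g. Qed.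
Lemma mulgK x y : mul (mul x y) (inv y) = x.
Proof. by rewrite -mulA mulgV mulg1. Qed.
Lemma invK x : inv (inv x) = x.
Proof. by rewrite -[inv (inv x)]mulg1 -(mulVg x) mulA mulVg mul1g. Qed.
Lemma chain3 a b c : mul (mul (inv a) b) (mul (inv b) c) = mul (inv a) c.
Proof. by rewrite -mulA mulKVg. Qed.

End Grp.

Inductive Off {L : Type} (lt : L -> L -> Prop) (d : L) : nat -> L -> Prop :=
| Off0 : Off lt d 0 d
| OffS n a b : Off lt d n a -> IsSucc lt a b -> Off lt d (S n) b.

Definition NonSucc {L : Type} (lt : L -> L -> Prop) (d : L) := ~ exists p, IsSucc lt p d.

Section Main.
Variables (K L : Type) (lt : L -> L -> Prop) (HL : @IsLambda K L lt).
Variables (G : Type) (mul : G -> G -> G) (one : G) (inv : G -> G) (Hg : IsGroup mul one inv).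
Variables (HGL : card_eq G L) (c : G -> K).

Definition wo : IsWellOrder lt := proj1 HL.

Lemma seg_small a : Small K (fun b => lt b a).
Proof. by case: HL => _ [_ [_ H]]; apply: H. Qed.

Lemma L_not_small : ~ Small K (fun _ : L => True).
Proof.
case: HL => _ [NF [NB _]] [F|H].
- by apply: NF; apply: fin_cl F; apply: cl_sigT.
- by apply: NB; apply: cl_trans H; apply: cl_sigT.
Qed.

Lemma G_not_small : ~ Small K (fun _ : G => True).
Proof.
move=> H; apply: L_not_small; apply: small_cl H.
case: HGL => [f [g [Hfg Hgf]]].
exists (fun u => exist (fun _ : G => True) (g (proj1_sig u)) I) => [[x hx] [y hy]] E.
apply: sigE => /=; rewrite -(Hgf x) -(Hgf y).
by move: (f_equal (@proj1_sig _ _) E) => /= ->.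
Qed.

Definition Block (i : K) (U : G -> Prop) (h : nat -> G) :=
  (forall m m', m < m' -> c (mul (inv (h m)) (h m')) = i) /\
  (forall m m', mul (inv (h m)) (h (S m)) = mul (inv (h m')) (h (S m')) -> m = m') /\
  (forall m, ~ U (mul (inv (h m)) (h (S m)))).

Lemma Block_mono i U V h : Block i U h -> (forall x, V x -> U x) -> Block i V h.
Proof. by move=> [H1 [H2 H3]] HV; split => //; split => // m /HV; apply: H3. Qed.

Lemma block_ex (U : G -> Prop) : Small K U -> exists i h, Block i U h.
Proof.
move=> HU.
pose Fb (a : L) (R : L -> G -> Prop) (x : G) :=
  (exists p q r yp yq yr, R p yp /\ R q yq /\ R r yr /\ x = mul yp (mul (inv yq) yr)) \/
  (exists p yp u, R p yp /\ U u /\ x = mul yp u).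
pose y := trec (wo_wf wo) (fun a R => epsilon (inhabits one) (fun x => ~ Fb a R x)).
have Hy : forall a, ~ Fb a (fun v z => lt v a /\ y v = z) (y a).
  move=> a; rewrite {2}/y trec_eq -/y.
  apply: (epsilon_spec (inhabits one) (fun x => ~ Fb a (fun v z => lt v a /\ y v = z) x)).
  apply: NNPP => N; apply: G_not_small.
  apply: (@small_sub K G (fun _ : G => True) (fun x => (exists t : L * (L * L), (lt t.1 a /\ (lt t.2.1 a /\ lt t.2.2 a)) /\ x = mul (y t.1) (mul (inv (y t.2.1)) (y t.2.2))) \/
                                 (exists t : L * G, (lt t.1 a /\ U t.2) /\ x = mul (y t.1) t.2))).
    move=> x _; have : Fb a (fun v z => lt v a /\ y v = z) x by apply: NNPP => N2; apply: N; exists x.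
    case=> [[p [q [r [yp [yq [yr [[Hp <-] [[Hq <-] [[Hr <-] ->]]]]]]]]]|[p [yp [u [[Hp <-] [Hu ->]]]]]].
    + by left; exists (p, (q, r)).
    + by right; exists (p, u).
  apply: small_union2.
  - have HP : Small K (fun t : L * (L * L) => lt t.1 a /\ (lt t.2.1 a /\ lt t.2.2 a)).
      apply: (@small_prod K L (L * L) (fun p => lt p a) (fun t : L * L => lt t.1 a /\ lt t.2 a)); first exact: seg_small.
      exact: (@small_prod K L L (fun p => lt p a) (fun p => lt p a) (seg_small a) (seg_small a)).
    exact: (@small_img K _ _ _ (fun t : L * (L * L) => mul (y t.1) (mul (inv (y t.2.1)) (y t.2.2))) HP).
  - have HP : Small K (fun t : L * G => lt t.1 a /\ U t.2).
      exact: (@small_prod K L G (fun p => lt p a) U (seg_small a) HU).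
    exact: (@small_img K _ _ _ (fun t : L * G => mul (y t.1) t.2) HP).
have Ufree : forall a b, lt a b -> ~ U (mul (inv (y a)) (y b)).
  move=> a b Hab HUab; apply: (Hy b); right; exists a, (y a), (mul (inv (y a)) (y b)).
  by split => //; split => //; rewrite (mulKVg Hg).
have yinj : forall a b, y a = y b -> a = b.
  move=> a b E; case: (wlt_tot wo a b) => [H|[//|H]].
  - case: (Hy b); left; exists a, a, a, (y a), (y a), (y a); do 3! (split => //).
    by rewrite (mulKVg Hg).
  - case: (Hy a); left; exists b, b, b, (y b), (y b), (y b); do 3! (split => //).
    by rewrite (mulKVg Hg).
have sidon : forall a b a' b', lt a b -> lt a' b' ->
    mul (inv (y a)) (y b) = mul (inv (y a')) (y b') -> a = a' /\ b = b'.
  move=> a b a' b' Hab Ha'b' E.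
  case: (wlt_tot wo b b') => [H|[Ebb'|H]].
  - case: (Hy b'); left; exists a', a, b, (y a'), (y a), (y b).
    split; first by split.
    split; first by split => //; exact: (wlt_trans wo Hab H).
    split; first by split.
    by rewrite E (mulKVg Hg).
  - subst b'; split => //; apply: yinj.
    have E2 : inv (y a) = inv (y a') by rewrite -(mulgK Hg (inv (y a)) (y b)) E (mulgK Hg).
    by rewrite -(invK Hg (y a)) E2 (invK Hg).
  - case: (Hy b); left; exists a, a', b', (y a), (y a'), (y b').
    split; first by split.
    split; first by split => //; exact: (wlt_trans wo Ha'b' H).
    split; first by split.
    by rewrite -E (mulKVg Hg).
have [_ [NLf [NB _]]] := HL.
have [j [H [Hinf Hhom]]] := hom wo (fun a b => c (mul (inv (y a)) (y b))) NLf NB.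
have [e [He Hinc]] := @inf_seq L lt wo H Hinf.
exists j, (fun n => y (e n)); split; last split.
- by move=> m m' Hm; apply: Hhom => //; apply: Hinc.
- move=> m m' E.
  have [E1 _] := sidon _ _ _ _ (Hinc m (S m) (Nat.lt_succ_diag_r m)) (Hinc m' (S m') (Nat.lt_succ_diag_r m')) E.
  case: (Nat.lt_trichotomy m m') => [Hm|[//|Hm]].
  + by have := Hinc _ _ Hm; rewrite E1 => /(wlt_irr wo).
  + by have := Hinc _ _ Hm; rewrite E1 => /(wlt_irr wo).
- by move=> m; apply: Ufree; apply: Hinc.
Qed.

Lemma colour_fix : exists i, forall U, Small K U -> exists h, Block i U h.
Proof.
apply: NNPP => N.
have G1 : forall i, exists U : G -> Prop, Small K U /\ forall h, ~ Block i U h.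
  move=> i; apply: NNPP => N2; apply: N; exists i => U HU; apply: NNPP => N3.
  by apply: N2; exists U; split => // h Hb; apply: N3; exists h.
have [Uf HUf] := choice_fun G1.
have HV : Small K (fun x => exists i, Uf i x) by apply: small_unionK => i; apply: (proj1 (HUf i)).
have [i [h Hb]] := block_ex HV.
apply: (proj2 (HUf i) h); apply: (@Block_mono i _ (Uf i) h Hb) => x Hx; by exists i.
Qed.


Lemma succ_uniq a b b' : IsSucc lt a b -> IsSucc lt a b' -> b = b'.
Proof.
move=> [H1 H2] [H1' H2'].
case: (H2 b' H1') => [//|Hbb']; case: (H2' b H1) => [//|Hb'b].
by case: (wlt_asym wo Hbb' Hb'b).
Qed.

Lemma pred_uniq a a' b : IsSucc lt a b -> IsSucc lt a' b -> a = a'.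
Proof.
move=> [H1 H2] [H1' H2'].
case: (wlt_tot wo a a') => [H|[//|H]].
- case: (H2 a' H) => [E|Hb].
  + by subst; case: (wlt_irr wo H1').
  + by case: (wlt_asym wo Hb H1').
- case: (H2' a H) => [E|Hb].
  + by subst; case: (wlt_irr wo H1).
  + by case: (wlt_asym wo Hb H1).
Qed.

Lemma off_ex a : exists d n, NonSucc lt d /\ Off lt d n a.
Proof.
elim/(well_founded_ind (wo_wf wo)): a => a IH.
case: (EM (exists p, IsSucc lt p a)) => [[p Hp]|Hn].
- have [d [n [Hd Ho]]] := IH p (proj1 Hp).
  by exists d, (S n); split => //; apply: OffS Ho Hp.
- by exists a, 0; split => //; apply: Off0.
Qed.

Lemma off_le d n a : Off lt d n a -> d = a \/ lt d a.
Proof.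
elim=> [|m x b _ [E|H] [Hs _]]; first by left.
- by subst; right.
- by right; apply: (wlt_trans wo H Hs).
Qed.

Lemma off_fun d n a a' : Off lt d n a -> Off lt d n a' -> a = a'.
Proof.
move=> H; elim: H a' => [|m x b Hx IH Hs] a' H'.
- by inversion H'.
- inversion H' as [|m0 x0 b0 Hx0 Hs0]; subst.
  by rewrite -(IH _ Hx0) in Hs0; apply: (succ_uniq Hs Hs0).
Qed.

Lemma off_uniq d d' n n' a : Off lt d n a -> Off lt d' n' a -> NonSucc lt d -> NonSucc lt d' -> d = d' /\ n = n'.
Proof.
move=> H; elim: H n' => [|m x b Hx IH Hs] n' H' Nd Nd'.
- inversion H' as [|m0 x0 b0 Hx0 Hs0]; subst => //.
  by case: Nd; exists x0.
- inversion H' as [|m0 x0 b0 Hx0 Hs0]; subst.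
  + by case: Nd'; exists x.
  + have E := pred_uniq Hs Hs0.
    subst x0; have [-> ->] := IH _ Hx0 Nd Nd'; by [].
Qed.

Lemma off_below d n a w : Off lt d n a -> lt d w -> NonSucc lt w -> lt a w.
Proof.
move=> H Hdw Nw; elim: H => [//|m x b _ IH [Hs Hs2]].
case: (Hs2 w IH) => [E|//].
by case: Nw; exists x; subst.
Qed.

Lemma arrow_main : exists g : L -> G, inj g /\ exists i, forall a n x, AFP lt mul g a n x -> c x = i.
Proof.
have [i Hi] := colour_fix.
have [dn Hdn] := choice_fun (fun a => match off_ex a with ex_intro d (ex_intro n H) => ex_intro (fun p : L * nat => NonSucc lt p.1 /\ Off lt p.1 p.2 a) (d, n) H end).
pose dl a := (dn a).1.
pose nn a := (dn a).2.
have Hdl : forall a, NonSucc lt (dl a) /\ Off lt (dl a) (nn a) a by move=> a; apply: Hdn.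
have dl_le : forall a, dl a = a \/ lt (dl a) a by move=> a; apply: off_le (proj2 (Hdl a)).
pose blk := trec (wo_wf wo) (fun w R => epsilon (inhabits (fun _ : nat => one))
  (fun h => Block i (fun x => exists a' b, lt a' w /\ R (dl a') b /\ x = mul (inv (b (nn a'))) (b (S (nn a')))) h)).
pose g a := mul (inv (blk (dl a) (nn a))) (blk (dl a) (S (nn a))).
have Hblk : forall w, Block i (fun x => exists a', lt a' w /\ x = g a') (blk w).
  move=> w.
  have HR : forall x, (exists a', lt a' w /\ x = g a') <->
     (exists a' b, lt a' w /\ (lt (dl a') w /\ blk (dl a') = b) /\ x = mul (inv (b (nn a'))) (b (S (nn a')))).
    move=> x; split.
    - move=> [a' [Ha' ->]]; exists a', (blk (dl a')); split => //; split => //; split => //.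
      by case: (dl_le a') => [->|H] //; apply: (wlt_trans wo H Ha').
    - by move=> [a' [b [Ha' [[_ <-] ->]]]]; exists a'.
  rewrite {1}/blk trec_eq -/blk.
  apply: (@Block_mono i (fun x => exists a' b, lt a' w /\ (lt (dl a') w /\ blk (dl a') = b) /\ x = mul (inv (b (nn a'))) (b (S (nn a'))))); last by move=> x /HR.
  apply: (epsilon_spec (inhabits (fun _ : nat => one))
    (fun h => Block i (fun x => exists a' b, lt a' w /\ (lt (dl a') w /\ blk (dl a') = b) /\ x = mul (inv (b (nn a'))) (b (S (nn a')))) h)).
  have [h Hh] := Hi _ (small_img g (seg_small w)).
  exists h; apply: (@Block_mono i _ _ h Hh) => x /HR.
  by move=> [a' [Ha' ->]]; exists a'.
exists g; split.
- move=> a b E.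
  have [Na Oa] := Hdl a; have [Nb Ob] := Hdl b.
  case: (wlt_tot wo (dl a) (dl b)) => [H|[Edl|H]].
  + have Hab := off_below Oa H Nb.
    by case: (proj2 (proj2 (Hblk (dl b))) (nn b)); exists a; split => //; rewrite -E.
  + have Enn : nn a = nn b.
      apply: (proj1 (proj2 (Hblk (dl a)))).
      by move: E; rewrite /g Edl.
    by apply: (off_fun Oa); rewrite Edl Enn.
  + have Hba := off_below Ob H Na.
    by case: (proj2 (proj2 (Hblk (dl a))) (nn a)); exists b; split => //; rewrite E.
- exists i.
  suff HA : forall a n x, AFP lt mul g a n x -> x = mul (inv (blk (dl a) (nn a))) (blk (dl a) (nn a + n + 1)).
    move=> a n x /HA ->; apply: (proj1 (Hblk (dl a))); lia.
  move=> a n x; elim=> [a0|a0 b0 m x0 Hs Hx IH].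
  + by rewrite /g Nat.add_0_r Nat.add_1_r.
  + have [Na Oa] := Hdl a0; have [Nb Ob] := Hdl b0.
    have [Ed En] := off_uniq (OffS Oa Hs) Ob Na Nb.
    rewrite IH /g -Ed -En (chain3 Hg).
    by have -> : S (nn a0) + m + 1 = nn a0 + S m + 1 by lia.
Qed.

End Main.


Lemma lambda_ex (K : Type) : exists (L : Type) (lt : L -> L -> Prop), @IsLambda K L lt.
Proof.
pose X := (nat * ((K -> bool) -> bool))%type.
have [lt0 wo0] := WO_exists X.
pose oz := olt lt0.
have owo : IsWellOrder oz := olt_wo wo0.
pose P z := ~ finite_type {v | oz v z} /\ ~ card_le {v | oz v z} (K -> bool).
have HXN : card_le X {v | oz v None}.
  by exists (fun x => exist (fun v => oz v None) (Some x) I) => x y E; move: (f_equal (@proj1_sig _ _) E) => [].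
have PN : P None.
  split.
  - move=> F; apply: nat_not_finite; apply: fin_cl F; apply: cl_trans HXN.
    by exists (fun n => (n, fun _ => true)) => n m [].
  - move=> HB; apply: (@cantor K); apply: cl_trans HB; apply: cl_trans HXN.
    by exists (fun p => (0, p)) => p q [].
have [a0 [Pa0 Ha0]] := min_ex owo P (ex_intro P None PN).
pose L := {v | oz v a0}.
pose lt (u v : L) := oz (proj1_sig u) (proj1_sig v).
exists L, lt; split; last split; last split.
- split.
  + by move=> a; apply: (wlt_irr owo).
  + by move=> a b c; apply: (wlt_trans owo).
  + move=> a b; case: (wlt_tot owo (proj1_sig a) (proj1_sig b)) => [H|[E|H]]; [by left| |by right; right].
    by right; left; apply: sigE.
  + suff H : forall z (u : L), proj1_sig u = z -> Acc lt u by move=> u; apply: (H _ u erefl).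
    move=> z; elim/(well_founded_ind (wo_wf owo)): z => z IH u Eu.
    constructor => v Hv; apply: (IH (proj1_sig v)) => //.
    by rewrite -Eu.
- exact: (proj1 Pa0).
- exact: (proj2 Pa0).
- move=> a.
  have Hle : card_le {b : L | lt b a} {v | oz v (proj1_sig a)}.
    exists (fun b => exist (fun v => oz v (proj1_sig a)) (proj1_sig (proj1_sig b)) (proj2_sig b)).
    move=> [b hb] [b' hb'] E; apply: sigE; apply: sigE.
    by move: (f_equal (@proj1_sig _ _) E).
  have NP : ~ P (proj1_sig a).
    move=> Pa; case: (Ha0 _ Pa) => [E|H].
    - by have := proj2_sig a; rewrite -E => /(wlt_irr owo).
    - by case: (wlt_asym owo H (proj2_sig a)).
  case: (EM (finite_type {v | oz v (proj1_sig a)})) => [F|NF].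
  + by left; apply: fin_cl Hle F.
  + right; apply: cl_trans Hle _; apply: NNPP => NB; by apply: NP.
Qed.

Theorem mainTheorem2 :
  forall K : Type,
    (exists (L : Type) (lt : L -> L -> Prop), @IsLambda K L lt) /\
    (forall (L : Type) (lt : L -> L -> Prop), @IsLambda K L lt -> @ArrowAFP K L lt).
Proof.
move=> K; split; first exact: lambda_ex.
move=> L lt HL G mul one inv Hg HGL c.
exact: (arrow_main HL Hg HGL c).
Qed.
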